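(* Fix two disjoint sets of vertices $S_1,S_2\subseteq V_n$. Let $T$ be a uniformly random spanning tree of $K_n$. Then the random graphs $H_1 = \left(S_1, E(T)\cap \binom{S_1}{2}\right)$ and $H_2 = \left(S_2, E(T)\cap \binom{S_2}{2}\right)$ are independent.
   Context: $K_n$ is the complete graph on vertex set $V_n=\{v_1,\dots,v_n\}$; $\binom{S}{2}$ denotes the set of 2-element subsets of $S$. *)

(* Defs.v *)
From mathcomp Require Import all_boot all_order all_algebra.
Set Implicit Arguments. Unset Strict Implicit. Unset Printing Implicit Defensive.
Import GRing.Theory Num.Theory.

(* Vertices of K_n: 'I_n.  Edges: 2-element subsets of 'I_n.
   A (spanning sub)graph of K_n is given by its edge set E : {set {set 'I_n}}. *)

Definition binom2 (n : nat) (S : {set 'I_n}) : {set {set 'I_n}} :=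
  [set e : {set 'I_n} | (e \subset S) && (#|e| == 2)].

Definition Kedges (n : nat) : {set {set 'I_n}} := binom2 [set: 'I_n].

Definition adj (n : nat) (E : {set {set 'I_n}}) : rel 'I_n :=
  fun x y => (x != y) && ([set x; y] \in E).

Definition connectedb (n : nat) (E : {set {set 'I_n}}) : bool :=
  [forall x : 'I_n, forall y : 'I_n, connect (adj E) x y].

(* acyclic: no cycle v_0 v_1 ... v_{k-1} v_0 of k >= 3 distinct vertices.
   A list of distinct vertices has length at most n, so k ranges over 'I_(n.+1). *)
Definition acyclicb (n : nat) (E : {set {set 'I_n}}) : bool :=
  [forall k : 'I_n.+1, forall t : k.-tuple 'I_n,
     ~~ [&& 2 < k, uniq t & cycle (adj E) t]].

Definition spanning_trees (n : nat) : {set {set {set 'I_n}}} :=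
  [set T : {set {set 'I_n}} | [&& T \subset Kedges n, connectedb T & acyclicb T]].

Definition Pr_ust (n : nat) (A : pred {set {set 'I_n}}) : rat :=
  (#|[set T in spanning_trees n | A T]|%:R / #|spanning_trees n|%:R)%R.

(* Main.v *)
Require Import Defs.
From mathcomp Require Import all_boot all_order all_algebra.
From mathcomp Require Import ring zify.
Set Implicit Arguments. Unset Strict Implicit. Unset Printing Implicit Defensive.

Lemma connect_ind_gen (T : finType) (e : rel T) (P : T -> Prop) x :
  P x -> (forall u v, P u -> e u v -> P v) -> forall y, connect e x y -> P y.
Proof.
move=> Px step y /connectP[p pp ->]; elim: p x Px pp => //= z p IH x Px.
by case/andP=> exz pz; apply: IH (step _ _ Px exz) pz.
Qed.

Section Graph.
Variable n : nat.
Implicit Types F G : {set {set 'I_n}}.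

Lemma adj_sym F x y : adj F x y = adj F y x.
Proof. by rewrite /adj eq_sym setUC. Qed.

Lemma adj_mono F G x y : F \subset G -> adj F x y -> adj G x y.
Proof. by rewrite /adj => FG /andP[-> h]; rewrite (subsetP FG _ h). Qed.

Lemma connect_mono F G x y : F \subset G -> connect (adj F) x y -> connect (adj G) x y.
Proof. by move=> FG; apply: connect_sub => u v /(adj_mono FG); apply: connect1. Qed.

Lemma connect_symA F x y : connect (adj F) x y -> connect (adj F) y x.
Proof.
apply: (connect_ind_gen (P := fun v => connect (adj F) v x)) => [|u v ux uv].
  exact: connect0.
by apply: connect_trans ux; apply: connect1; rewrite adj_sym.
Qed.

Lemma connect_symE F x y : connect (adj F) x y = connect (adj F) y x.
Proof. by apply/idP/idP; apply: connect_symA. Qed.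

Lemma adj_add F x y u v : adj (F :|: [set [set x; y]]) u v ->
  adj F u v \/ (u != v /\ [set u; v] = [set x; y]).
Proof.
case/andP=> uv; rewrite in_setU in_set1 => /orP[h|/eqP h]; first by left; rewrite /adj uv.
by right.
Qed.

Lemma set2_eq (x y u v : 'I_n) : [set u; v] = [set x; y] -> (u = x /\ v = y) \/ (u = y /\ v = x).
Proof.
move=> h.
have ux : u \in [set x; y] by rewrite -h set21.
have vx : v \in [set x; y] by rewrite -h set22.
have xu : x \in [set u; v] by rewrite h set21.
have yu : y \in [set u; v] by rewrite h set22.
move: ux vx xu yu; rewrite !in_set2.
by move=> /orP[]/eqP-> /orP[]/eqP-> /orP[]/eqP ? /orP[]/eqP ?; subst; first [by left | by right].
Qed.

Lemma connect_add F x y u v :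
  connect (adj (F :|: [set [set x; y]])) u v =
  [|| connect (adj F) u v,
      connect (adj F) u x && connect (adj F) y v |
      connect (adj F) u y && connect (adj F) x v].
Proof.
set G := F :|: _.
have FG : F \subset G by apply: subsetUl.
have exy : connect (adj G) x y.
  case: (x =P y) => [->|/eqP nxy]; first exact: connect0.
  by apply: connect1; rewrite /adj nxy in_setU in_set1 eqxx orbT.
apply/idP/idP; last first.
  case/or3P=> [/(connect_mono FG)//|/andP[h1 h2]|/andP[h1 h2]].
    apply: connect_trans (connect_mono FG h1) _.
    exact: connect_trans exy (connect_mono FG h2).
  apply: connect_trans (connect_mono FG h1) _.
  by apply: connect_trans (connect_mono FG h2); rewrite connect_symE.
move: v; apply: connect_ind_gen; first by rewrite connect0.
move=> a b Ha /adj_add [hab|[_ /set2_eq [[? ?]|[? ?]]]]; subst.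
- have hb : forall c, connect (adj F) c a -> connect (adj F) c b.
    by move=> c ca; apply: connect_trans ca (connect1 hab).
  by case/or3P: Ha => [/hb->//|/andP[-> /hb->]|/andP[-> /hb->]]; rewrite ?orbT.
- by case/or3P: Ha => [h|/andP[h _]|/andP[h _]]; rewrite h ?connect0 ?orbT.
- by case/or3P: Ha => [h|/andP[h _]|/andP[h _]]; rewrite h ?connect0 ?orbT.
Qed.


Lemma acyc_cycle F s : acyclicb F -> 2 < size s -> uniq s -> cycle (adj F) s -> False.
Proof.
move=> hF s2 us cs.
have hs : size s < n.+1.
  by rewrite ltnS -(card_uniqP us); apply: leq_trans (max_card _) _; rewrite card_ord.
have := forallP (forallP hF (Ordinal hs)) (in_tuple s).
by rewrite /= s2 us cs.
Qed.

Lemma cycle_acyc F : (forall s, 2 < size s -> uniq s -> cycle (adj F) s -> False) -> acyclicb F.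
Proof.
move=> h; apply/forallP => k; apply/forallP => t; apply/negP => /and3P[k2 ut ct].
by apply: (h (tval t)); rewrite ?size_tuple.
Qed.

Lemma acyc_sub F G : F \subset G -> acyclicb G -> acyclicb F.
Proof.
move=> FG hG; apply: cycle_acyc => s s2 us cs; apply: (acyc_cycle hG s2 us).
by apply: sub_cycle cs => u v; apply: adj_mono.
Qed.

Lemma adj_new F x y : x != y -> adj (F :|: [set [set x; y]]) y x.
Proof. by move=> xy; rewrite /adj eq_sym xy setUC in_setU in_set1 eqxx orbT. Qed.

Lemma cyc_close F x y : x != y -> connect (adj F) x y -> [set x; y] \notin F ->
  ~~ acyclicb (F :|: [set [set x; y]]).
Proof.
move=> xy /connectP[p pp ey] eF; subst y; move: xy eF.
case: (shortenP pp) => p' pp' up' _ xy eF.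
apply/negP => hac.
apply: (acyc_cycle hac (s := x :: p')) => //.
  case: p' pp' up' xy eF {hac} => [|z [|w q]] //=; first by move=> _ _; rewrite eqxx.
  by rewrite andbT => hz _ _; move: hz; rewrite /adj => /andP[_ ->].
rewrite /= rcons_path adj_new // andbT.
by apply: sub_path pp' => u v; apply: adj_mono; apply: subsetUl.
Qed.

Lemma acyc_edge F x y : acyclicb F -> x != y -> [set x; y] \in F ->
  ~~ connect (adj (F :\ [set x; y])) x y.
Proof.
move=> hF xy eF; apply/negP => hc.
have h : [set x; y] \notin F :\ [set x; y] by rewrite !inE eqxx.
have := cyc_close xy hc h.
by rewrite setUC setD1K // hF.
Qed.

Lemma edge_acyc F : (forall x y, x != y -> [set x; y] \in F ->
  ~~ connect (adj (F :\ [set x; y])) x y) -> acyclicb F.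
Proof.
move=> h; apply: cycle_acyc => [[|a [|b p]]] // s2 us.
rewrite /= rcons_path => /and3P[hab hp hl].
case/andP: hab => ab eab.
apply: (negP (h a b ab eab)); rewrite connect_symE; apply/connectP.
exists (rcons p a); last by rewrite last_rcons.
move: us; rewrite /= !inE negb_or => /andP[/andP[_ anp] /andP[bnp up]].
rewrite rcons_path; apply/andP; split.
  apply: (@sub_in_path _ (fun z => z != a)); last exact: hp.
    move=> u v ua va /andP[uv euv]; rewrite /adj uv !inE euv andbT /=.
    apply/negP => /eqP /set2_eq [[ua' _]|[_ va']]; first by move: ua; rewrite ua' unfold_in /= eqxx.
    by move: va; rewrite va' unfold_in /= eqxx.
  apply/allP => z; rewrite inE => /orP[/eqP->|zp]; first by rewrite eq_sym.
  by apply/negP => /eqP za; rewrite -za zp in anp.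
move: hl; rewrite /adj => /andP[-> el]; rewrite !inE el andbT /=.
apply/negP => /eqP /set2_eq [[_ ab']|[lb _]]; first by rewrite ab' eqxx in ab.
case: p s2 bnp lb {hp anp up el} => // c p _ bnp /= lb.
by move: bnp; rewrite -lb mem_last.
Qed.

Lemma acyc_add F x y : acyclicb F -> ~~ connect (adj F) x y ->
  acyclicb (F :|: [set [set x; y]]).
Proof.
move=> hF nc.
have xy : x != y by apply/negP => /eqP e; rewrite e connect0 in nc.
have eF : [set x; y] \notin F.
  by apply/negP => e; rewrite connect1 // /adj xy e in nc.
apply: edge_acyc => u v uv; rewrite in_setU in_set1 => /orP[fF|/eqP fe].
  have -> : (F :|: [set [set x; y]]) :\ [set u; v] = (F :\ [set u; v]) :|: [set [set x; y]].
    apply/setP => z; rewrite !inE; case: (z =P [set x; y]) => [->|]; rewrite ?orbT ?orbF //.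
    by rewrite andbT; apply/negP => /eqP e; move: eF; rewrite e fF.
  rewrite connect_add; have := acyc_edge hF uv fF; move/negbTE => -> /=.
  have sub : F :\ [set u; v] \subset F by apply: subsetDl.
  have euv : connect (adj F) u v by apply: connect1; rewrite /adj uv fF.
  apply/negP => /orP[/andP[h1 h2]|/andP[h1 h2]]; move: nc; apply/negP/negPn.
    apply: (connect_trans (y := u)); first by rewrite connect_symE; apply: connect_mono h1.
    by apply: connect_trans euv _; rewrite connect_symE; apply: connect_mono h2.
  apply: (connect_trans (y := v)); first exact: connect_mono h2.
  apply: (connect_trans (y := u)); first by rewrite connect_symE.
  exact: connect_mono h1.
rewrite fe setUC setU1K //.
case/set2_eq: fe => [[-> ->]|[-> ->]] //; by rewrite connect_symE.
Qed.

End Graph.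

Definition comp n (F : {set {set 'I_n}}) x : {set 'I_n} := [set y | connect (adj F) x y].
Definition parts n (F : {set {set 'I_n}}) : {set {set 'I_n}} := [set comp F x | x : 'I_n].
Definition Pi n (F : {set {set 'I_n}}) : nat := \prod_(C in parts F) #|C|.

Section Comp.
Variable n : nat.
Implicit Types F G : {set {set 'I_n}}.

Lemma conn_eq F a b w : connect (adj F) a b -> connect (adj F) a w = connect (adj F) b w.
Proof.
move=> ab; apply/idP/idP => h; last exact: connect_trans ab h.
by apply: connect_trans h; rewrite connect_symE.
Qed.

Lemma comp_self F x : x \in comp F x.
Proof. by rewrite inE connect0. Qed.

Lemma comp_eqP F x y : comp F x = comp F y <-> connect (adj F) x y.
Proof.
split=> [e|h]; first by have := comp_self F y; rewrite -e inE.
by apply/setP => w; rewrite !inE (conn_eq _ h).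
Qed.

Lemma comp_add F x y z : ~~ connect (adj F) x y ->
  comp (F :|: [set [set x; y]]) z =
  if connect (adj F) z x || connect (adj F) z y then comp F x :|: comp F y else comp F z.
Proof.
move=> nxy; apply/setP => w.
case hzx: (connect (adj F) z x); case hzy: (connect (adj F) z y);
  rewrite /= !inE connect_add hzx hzy /=.
- by move: nxy; rewrite -(conn_eq _ hzx) hzy.
- by rewrite (conn_eq _ hzx); case: (connect _ x w); case: (connect _ y w).
- by rewrite (conn_eq _ hzy) orbC.
- by rewrite orbF.
Qed.

Lemma parts_add F x y : ~~ connect (adj F) x y ->
  parts (F :|: [set [set x; y]]) =
  (comp F x :|: comp F y) |: ((parts F :\ comp F x) :\ comp F y).
Proof.
move=> nxy; apply/setP => C; rewrite !inE.
apply/imsetP/idP => [[z _ ->]|].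
  rewrite comp_add //; case: ifP => [_|]; first by rewrite eqxx.
  move/negbT; rewrite negb_or => /andP[nzx nzy].
  apply/orP; right; rewrite imset_f // andbT.
  by apply/andP; split; apply/negP => /eqP /comp_eqP h; [rewrite h in nzy | rewrite h in nzx].
case/orP => [/eqP ->|/and3P[Cy Cx /imsetP[z _ Cz]]].
  by exists x => //; rewrite comp_add // connect0.
exists z => //; rewrite comp_add // Cz; case: ifP => // /orP[] h.
  by move: Cx; rewrite Cz; move/comp_eqP: h => ->; rewrite eqxx.
by move: Cy; rewrite Cz; move/comp_eqP: h => ->; rewrite eqxx.
Qed.

Lemma comp_disj F x y : ~~ connect (adj F) x y -> [disjoint comp F x & comp F y].
Proof.
move=> nxy; apply/pred0P => w /=; apply/negP => /andP[]; rewrite !inE => xw yw.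
by move: nxy; rewrite (connect_trans xw) // connect_symE.
Qed.

Lemma comp_neq F x y : ~~ connect (adj F) x y -> comp F x != comp F y.
Proof. by move=> nxy; apply/negP => /eqP /comp_eqP; apply/negP. Qed.

Lemma union_notin F x y : ~~ connect (adj F) x y ->
  comp F x :|: comp F y \notin parts F.
Proof.
move=> nxy; apply/negP => /imsetP[z _ e].
have : x \in comp F z by rewrite -e inE comp_self.
have : y \in comp F z by rewrite -e inE comp_self orbT.
rewrite !inE => zy zx; move: nxy; rewrite connect_symE in zx.
by rewrite (connect_trans zx zy).
Qed.

Lemma card_parts_add F x y : ~~ connect (adj F) x y ->
  #|parts (F :|: [set [set x; y]])|.+1 = #|parts F|.
Proof.
move=> nxy; rewrite parts_add // cardsU1.
have -> : comp F x :|: comp F y \notin (parts F :\ comp F x) :\ comp F y.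
  by rewrite !inE (negbTE (union_notin nxy)) !andbF.
rewrite (cardsD1 (comp F x) (parts F)) (cardsD1 (comp F y) (parts F :\ comp F x)).
by rewrite !inE !imset_f // eq_sym (comp_neq nxy).
Qed.

Lemma Pi_add F x y : ~~ connect (adj F) x y ->
  Pi (F :|: [set [set x; y]]) * (#|comp F x| * #|comp F y|) =
  Pi F * (#|comp F x| + #|comp F y|).
Proof.
move=> nxy; rewrite /Pi parts_add // big_setU1 /=; last first.
  by rewrite !inE (negbTE (union_notin nxy)) !andbF.
rewrite [in RHS](big_setD1 (comp F x)) ?imset_f //.
rewrite [in RHS](big_setD1 (comp F y)) /=; last first.
  by rewrite !inE eq_sym (comp_neq nxy) imset_f.
rewrite cardsU (disjoint_setI0 (comp_disj nxy)) cards0 subn0.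
set P := \prod_(_ in _) _.
by ring.
Qed.

End Comp.

Section Count.
Variable n : nat.
Implicit Types F G : {set {set 'I_n}}.

Lemma kedge2 (e : {set 'I_n}) : e \in Kedges n -> exists x y, x != y /\ e = [set x; y].
Proof. by rewrite /Kedges /binom2 inE => /andP[_ /cards2P]. Qed.

Lemma kedge_in (x y : 'I_n) : x != y -> [set x; y] \in Kedges n.
Proof. by move=> xy; rewrite /Kedges /binom2 inE subsetT cards2 xy. Qed.

Lemma comp0 x : comp (set0 : {set {set 'I_n}}) x = [set x].
Proof.
apply/setP => w; rewrite !inE; apply/idP/idP => [|/eqP ->]; last exact: connect0.
move=> h; apply/eqP; move: w h; apply: connect_ind_gen => // u v _.
by rewrite /adj inE andbF.
Qed.

Lemma card_parts0 : #|parts (set0 : {set {set 'I_n}})| = n.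
Proof.
rewrite /parts (eq_imset _ comp0) card_imset ?cardsT ?card_ord //.
exact: set1_inj.
Qed.

Lemma parts_count_aux m F : #|F| = m -> acyclicb F -> F \subset Kedges n -> #|parts F| + m = n.
Proof.
elim: m F => [|m IH] F hm hF hK.
  by rewrite (cards0_eq hm) card_parts0 addn0.
have : F != set0 by apply/negP => /eqP F0; rewrite F0 cards0 in hm.
case/set0Pn => e eF.
have [x [y [xy ee]]] := kedge2 (subsetP hK _ eF); subst e.
set F' := F :\ [set x; y].
have hF' : acyclicb F' by apply: acyc_sub hF; apply: subsetDl.
have hm' : #|F'| = m by move: hm; rewrite (cardsD1 [set x; y] F) eF => -[].
have nc := acyc_edge hF xy eF.
have eqF : F = F' :|: [set [set x; y]] by rewrite setUC setD1K.
have := IH F' hm' hF' (subset_trans (subsetDl _ _) hK).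
by rewrite eqF -(card_parts_add nc) addSnnS.
Qed.

Lemma parts_count F : acyclicb F -> F \subset Kedges n -> #|parts F| + #|F| = n.
Proof. exact: parts_count_aux. Qed.

End Count.

Definition fT n (F : {set {set 'I_n}}) : nat := #|[set T in spanning_trees n | F \subset T]|.

Section Trees.
Variable n : nat.
Implicit Types F G T : {set {set 'I_n}}.

Lemma pairs_card (E : {set {set 'I_n}}) : E \subset Kedges n ->
  #|[set p : 'I_n * 'I_n | (p.1 != p.2) && ([set p.1; p.2] \in E)]| = 2 * #|E|.
Proof.
move=> hE.
rewrite -sum1_card (partition_big (fun p : 'I_n * 'I_n => [set p.1; p.2]) (fun e => e \in E)) /=; last first.
  by move=> p; rewrite inE => /andP[].
rewrite mulnC -sum_nat_const; apply: eq_bigr => e eE.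
have [x [y [xy ee]]] := kedge2 (subsetP hE _ eE); subst e.
rewrite sum1dep_card.
have -> : [set p : 'I_n * 'I_n | (p \in [set p0 | (p0.1 != p0.2) && ([set p0.1; p0.2] \in E)])
     && ([set p.1; p.2] == [set x; y])] = [set (x, y); (y, x)].
  apply/setP => -[u v]; rewrite !inE /=; apply/idP/idP.
    case/andP=> /andP[uv _] /eqP /set2_eq [[-> ->]|[-> ->]]; by rewrite eqxx ?orbT.
  case/orP => /eqP [-> ->]; rewrite ?xy ?eqxx ?andbT ?eE //.
  by rewrite eq_sym xy setUC eqxx andbT.
rewrite cards2; case: eqP => // -[e _]; by rewrite e eqxx in xy.
Qed.

Lemma ST_inP T : T \in spanning_trees n = [&& T \subset Kedges n, connectedb T & acyclicb T].
Proof. by rewrite inE. Qed.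

Lemma conn_parts T (x0 : 'I_n) : connectedb T -> parts T = [set setT].
Proof.
move=> hc; have ct : forall x, comp T x = setT.
  by move=> x; apply/setP => y; rewrite !inE; apply: (forallP (forallP hc x) y).
apply/setP => C; rewrite inE; apply/imsetP/eqP => [[z _ ->]|->]; first exact: ct.
by exists x0; rewrite ?ct.
Qed.

Lemma ST_card T (x0 : 'I_n) : T \in spanning_trees n -> #|T|.+1 = n.
Proof.
rewrite ST_inP => /and3P[hK hc ha].
by have := parts_count ha hK; rewrite (conn_parts x0 hc) cards1 add1n.
Qed.

Lemma fT_zero F : ~~ acyclicb F -> fT F = 0.
Proof.
move=> na; apply/eqP; rewrite cards_eq0; apply/eqP/setP => T; rewrite !inE.
apply/negP => /andP[/and3P[_ _ ha] FT]; by rewrite (acyc_sub FT ha) in na.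
Qed.

Lemma parts1_conn F : #|parts F| = 1 -> connectedb F.
Proof.
case/eqP/cards1P => C PC; apply/forallP => x; apply/forallP => y.
have : comp F x \in parts F by apply: imset_f.
have : comp F y \in parts F by apply: imset_f.
rewrite PC !inE => /eqP ey /eqP ex.
by have := comp_self F y; rewrite ey -ex inE.
Qed.

End Trees.

Lemma card_sum (X : finType) (Q : pred X) : #|[set x | Q x]| = \sum_x (Q x : nat).
Proof. by rewrite -sum1dep_card big_mkcond; apply: eq_bigr => x _; case: (Q x). Qed.

Section Double.
Variable n : nat.
Implicit Types F G T : {set {set 'I_n}}.

Lemma double_count F (x0 : 'I_n) k : acyclicb F -> F \subset Kedges n -> #|parts F| = k.+2 ->
  2 * (fT F * k.+1) =
  \sum_(p : 'I_n * 'I_n | ~~ connect (adj F) p.1 p.2) fT (F :|: [set [set p.1; p.2]]).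
Proof.
move=> hF hK hk.
set S := [set T in spanning_trees n | F \subset T].
have hsz : forall T, T \in S -> #|T :\: F| = k.+1.
  move=> T; rewrite inE => /andP[TS FT].
  have h1 := ST_card x0 TS; have h2 := parts_count hF hK.
  rewrite cardsD (setIidPr FT); rewrite hk in h2; lia.
have -> : fT F * k.+1 = \sum_(T in S) #|T :\: F|.
  by rewrite /fT -/S -sum_nat_const; apply: eq_bigr => T /hsz.
rewrite big_distrr /=.
transitivity (\sum_(T in S) \sum_(p : 'I_n * 'I_n)
   ((p.1 != p.2) && ([set p.1; p.2] \in T :\: F) : nat)).
  apply: eq_bigr => T; rewrite inE => /andP[TS _].
  rewrite -pairs_card ?card_sum //.
  by apply: subset_trans (subsetDl _ _) _; move: TS; rewrite ST_inP => /andP[].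
rewrite exchange_big /= [RHS]big_mkcond /=; apply: eq_bigr => -[u v] _ /=.
case hc: (connect (adj F) u v) => /=.
  apply: big1 => T; rewrite inE => /andP[TS FT]; apply/eqP; rewrite eqb0.
  apply/negP => /andP[uv]; rewrite inE => /andP[eF eT].
  move: TS; rewrite ST_inP => /and3P[_ _ ha].
  have : acyclicb (F :|: [set [set u; v]]).
    by apply: acyc_sub ha; rewrite subUset FT sub1set eT.
  by apply/negP; apply: cyc_close.
have uv : u != v by apply/negP => /eqP e; rewrite e connect0 in hc.
have eF : [set u; v] \notin F.
  by apply/negP => e; rewrite connect1 // /adj uv e in hc.
rewrite /fT card_sum big_mkcond /=; apply: eq_bigr => T _.
rewrite !inE subUset sub1set uv (negbTE eF) /=.
by case: [&& T \subset Kedges n, connectedb T & acyclicb T]; case: (F \subset T); case: ([set u; v] \in T).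
Qed.

End Double.

Section Rat.
Import GRing.Theory Num.Theory.
Local Open Scope ring_scope.
Variable n : nat.
Implicit Types F G T : {set {set 'I_n}}.

Lemma comp_card_gt0 F x : (0 < #|comp F x|)%N.
Proof. by apply/card_gt0P; exists x; apply: comp_self. Qed.

Lemma sum_inv_comp F : \sum_(x : 'I_n) (#|comp F x|%:R : rat)^-1 = #|parts F|%:R.
Proof.
rewrite (partition_big_imset (comp F)) /= -/(parts F) -sum1_card natr_sum.
apply: eq_bigr => C /imsetP[z _ ->].
rewrite (eq_bigr (fun _ => (#|comp F z|%:R : rat)^-1)); last first.
  by move=> x /eqP ->.
rewrite sumr_const.
have -> : #|[pred x : 'I_n | comp F x == comp F z]| = #|comp F z|.
  apply: eq_card => x; rewrite !inE; apply/eqP/idP => [/comp_eqP|h].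
    by rewrite connect_symE.
  by apply/comp_eqP; rewrite connect_symE.
by rewrite -[_ *+ _]mulr_natl mulfV // pnatr_eq0 -lt0n comp_card_gt0.
Qed.

Lemma sum_main F k : #|parts F| = k.+1 ->
  \sum_(p : 'I_n * 'I_n | ~~ connect (adj F) p.1 p.2)
     ((#|comp F p.1|%:R : rat)^-1 + (#|comp F p.2|%:R)^-1) = 2%:R * n%:R * k%:R.
Proof.
move=> hk; rewrite big_split /=.
have sw : \sum_(p : 'I_n * 'I_n | ~~ connect (adj F) p.1 p.2) (#|comp F p.2|%:R : rat)^-1 =
          \sum_(p : 'I_n * 'I_n | ~~ connect (adj F) p.1 p.2) (#|comp F p.1|%:R)^-1.
  rewrite (reindex_inj (h := fun p : 'I_n * 'I_n => (p.2, p.1))) /=; last by move=> [a b] [c d] [-> ->].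
  by apply: eq_bigl => p; rewrite connect_symE.
rewrite sw.
have one : \sum_(p : 'I_n * 'I_n | ~~ connect (adj F) p.1 p.2) (#|comp F p.1|%:R : rat)^-1
    = n%:R * k%:R.
  transitivity (\sum_x \sum_(y | ~~ connect (adj F) x y) (#|comp F x|%:R : rat)^-1).
    by rewrite pair_big_dep; apply: eq_bigl.
  have ex : forall x, \sum_(y | ~~ connect (adj F) x y) (#|comp F x|%:R : rat)^-1
       = n%:R * (#|comp F x|%:R)^-1 - 1.
    move=> x; rewrite sumr_const.
    have hc := cardsC (comp F x); rewrite card_ord in hc.
    have -> : #|[pred y | ~~ connect (adj F) x y]| = #|~: comp F x|.
      by apply: eq_card => y; rewrite !inE.
    have e : (#|~: comp F x|%:R : rat) = n%:R - #|comp F x|%:R by apply/eqP; rewrite eq_sym subr_eq -natrD addnC hc.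
    rewrite -[_ *+ _]mulr_natl e mulrBl mulfV // pnatr_eq0 -lt0n comp_card_gt0 //.
  rewrite (eq_bigr _ (fun x _ => ex x)) sumrB -mulr_sumr sum_inv_comp hk sumr_const card_ord.
  by rewrite -mulr_natl mulr1; ring.
rewrite one; ring.
Qed.

Lemma formula_aux k F (x0 : 'I_n) : #|parts F| = k.+1 -> acyclicb F -> F \subset Kedges n ->
  (fT F)%:R * n%:R ^+ 2 = n%:R ^+ k.+1 * (Pi F)%:R :> rat.
Proof.
elim: k F => [|k IH] F hk hF hK.
  have hc := parts1_conn hk.
  have FS : F \in spanning_trees n by rewrite ST_inP hK hc hF.
  have -> : fT F = 1%N.
    rewrite /fT; apply/eqP/cards1P; exists F; apply/setP => T; rewrite !inE.
    apply/andP/eqP => [[TS FT]|->]; last by rewrite -ST_inP FS subxx.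
    apply/eqP; rewrite eq_sym eqEcard FT /=.
    rewrite -ST_inP in TS; have h1 := ST_card x0 TS; have h2 := ST_card x0 FS.
    have e : #|T| = #|F| by apply: succn_inj; rewrite h1 h2.
    by rewrite e.
  by rewrite /Pi (conn_parts x0 hc) big_set1 cardsT card_ord mul1r expr1 expr2.
have dc := double_count x0 hF hK hk.
have key : forall p : 'I_n * 'I_n, ~~ connect (adj F) p.1 p.2 ->
    (fT (F :|: [set [set p.1; p.2]]))%:R * n%:R ^+ 2 =
    n%:R ^+ k.+1 * (Pi F)%:R * ((#|comp F p.1|%:R : rat)^-1 + (#|comp F p.2|%:R)^-1).
  move=> [u v] /= nc.
  have uv : u != v by apply/negP => /eqP e; rewrite e connect0 in nc.
  rewrite IH; last first.
  - by rewrite subUset hK sub1set kedge_in.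
  - exact: acyc_add.
  - by apply/eqP; rewrite -eqSS (card_parts_add nc) hk.
  rewrite -mulrA; congr (_ * _).
  have := congr1 (fun m => (m%:R : rat)) (Pi_add nc); rewrite /= !natrM natrD => h.
  have ha : (#|comp F u|%:R : rat) != 0 by rewrite pnatr_eq0 -lt0n comp_card_gt0.
  have hb : (#|comp F v|%:R : rat) != 0 by rewrite pnatr_eq0 -lt0n comp_card_gt0.
  apply: (mulIf (mulf_neq0 ha hb)); rewrite h; field.
  by rewrite ha hb.
have := congr1 (fun m => (m%:R : rat) * n%:R ^+ 2) dc; rewrite /= natr_sum mulr_suml.
rewrite (eq_bigr _ key) -mulr_sumr (sum_main (k := k.+1)) // => h.
have c0 : (2%:R * k.+1%:R : rat) != 0 by rewrite mulf_neq0 // pnatr_eq0.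
apply: (mulfI c0).
transitivity ((2 * (fT F * k.+1))%:R * n%:R ^+ 2 : rat); first by rewrite !natrM; ring.
by rewrite h !exprS; ring.
Qed.

Lemma formula F (x0 : 'I_n) : acyclicb F -> F \subset Kedges n ->
  (fT F)%:R * n%:R ^+ 2 = n%:R ^+ #|parts F| * (Pi F)%:R :> rat.
Proof.
have : (0 < #|parts F|)%N by apply/card_gt0P; exists (comp F x0); apply: imset_f.
case hk: #|parts F| => [//|k] _; exact: formula_aux.
Qed.

End Rat.

Section Moeb.
Import GRing.Theory Num.Theory.
Local Open Scope ring_scope.
Variable X : finType.

Lemma moeb (F B : {set X}) : F \subset B ->
  \sum_(G : {set X} | (F \subset G) && (G \subset B)) (-1) ^+ #|G :\: F| = (F == B)%:R :> rat.
Proof.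
move=> FB; case: (boolP (B \subset F)) => [BF|].
  have eFB : F = B by apply/eqP; rewrite eqEsubset FB BF.
  subst F; rewrite eqxx (big_pred1 B) ?setDv ?cards0 ?expr0 //.
  by move=> G /=; rewrite -eqEsubset eq_sym.
case/subsetPn => z zB zF.
have -> : (F == B) = false by apply/negP => /eqP e; rewrite e zB in zF.
rewrite (bigID [pred G : {set X} | z \in G]) /=.
rewrite (reindex_onto (fun G => z |: G) (fun G => G :\ z)) /=; last first.
  by move=> G /andP[_ zG]; rewrite setD1K.
set P := fun G : {set X} => ((F \subset G) && (G \subset B)) && (z \notin G).
rewrite [X in _ + X](eq_bigl P) //.
rewrite (eq_big P (fun G => - (-1) ^+ #|G :\: F|)).
- by rewrite sumrN addNr.
- move=> G; rewrite /P in_setU1 eqxx /= andbT subUset sub1set zB /=.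
  case zG: (z \in G) => /=.
    rewrite andbF; apply/negbTE; apply/negP => /andP[_ /eqP e].
    by have := setD11 z (z |: G); rewrite e zG.
  rewrite setU1K ?zG // eqxx !andbT; congr (_ && _).
  apply/idP/idP => h; apply/subsetP => w wF.
    have := subsetP h w wF; rewrite in_setU1 => /orP[/eqP wz|//].
    by rewrite -wz wF in zF.
  by rewrite in_setU1 (subsetP h w wF) orbT.
move=> G /andP[_ zG0].
have zG : z \notin G.
  by apply/negP => zG'; move/eqP: zG0 => e; have := setD11 z (z |: G); rewrite e zG'.
rewrite setDUl (_ : [set z] :\: F = [set z]); last first.
  apply/setP => w; rewrite !inE; case: (w =P z) => [->|]; by rewrite ?andbF ?andbT ?zF.
by rewrite cardsU1 !inE (negbTE zG) andbF /= add1n exprS mulN1r.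
Qed.

End Moeb.

Section Split.
Variable n : nat.
Variables S1 S2 : {set 'I_n}.
Hypothesis hdis : [disjoint S1 & S2].
Implicit Types F G T : {set {set 'I_n}}.

Lemma binom2_adj (S : {set 'I_n}) G u v : G \subset binom2 S -> adj G u v -> (u \in S) && (v \in S).
Proof.
move=> hG /andP[_ /(subsetP hG)]; rewrite inE => /andP[/subsetP h _].
by rewrite !h // !inE eqxx ?orbT.
Qed.

Lemma conn_stay (S : {set 'I_n}) G x y : G \subset binom2 S -> x \in S ->
  connect (adj G) x y -> y \in S.
Proof.
move=> hG xS; move: y; apply: connect_ind_gen => // u v _ /(binom2_adj hG) /andP[].
done.
Qed.

Lemma conn_out (S : {set 'I_n}) G x y : G \subset binom2 S -> x \notin S ->
  connect (adj G) x y -> y = x.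
Proof.
move=> hG xS; move: y; apply: connect_ind_gen => // u v -> /(binom2_adj hG) /andP[h _].
by rewrite h in xS.
Qed.

Lemma comp_out (S : {set 'I_n}) G x : G \subset binom2 S -> x \notin S -> comp G x = [set x].
Proof.
move=> hG xS; apply/setP => y; rewrite !inE; apply/idP/eqP => [/(conn_out hG xS)//|->].
exact: connect0.
Qed.

Lemma conn_restr G1 G2 x y : G1 \subset binom2 S1 -> G2 \subset binom2 S2 -> x \in S1 ->
  connect (adj (G1 :|: G2)) x y -> connect (adj G1) x y.
Proof.
move=> h1 h2 xS cxy.
suff : (y \in S1) /\ connect (adj G1) x y by case.
move: y cxy; apply: (connect_ind_gen (P := fun v => (v \in S1) /\ connect (adj G1) x v)).
  by rewrite xS connect0.
move=> u v [uS cu] /andP[uv]; rewrite in_setU => /orP[e1|e2].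
  have a : adj G1 u v by rewrite /adj uv e1.
  by case/andP: (binom2_adj h1 a) => _ ->; split=> //; apply: connect_trans cu (connect1 a).
have a : adj G2 u v by rewrite /adj uv e2.
case/andP: (binom2_adj h2 a) => uS2 _.
by rewrite (disjointFr hdis uS) in uS2.
Qed.

Lemma comp_restr G1 G2 x : G1 \subset binom2 S1 -> G2 \subset binom2 S2 -> x \in S1 ->
  comp (G1 :|: G2) x = comp G1 x.
Proof.
move=> h1 h2 xS; apply/setP => y; rewrite !inE; apply/idP/idP; first exact: conn_restr.
by apply: connect_mono; apply: subsetUl.
Qed.

End Split.

Section Split2.
Variable n : nat.
Implicit Types F G T : {set {set 'I_n}}.

Lemma binom_disj (A B : {set 'I_n}) : [disjoint A & B] -> [disjoint binom2 A & binom2 B].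
Proof.
move=> hAB; apply/pred0P => e /=; apply/negP => /andP[]; rewrite !inE.
case/andP=> eA /eqP e2 /andP[eB _].
have : (0 < #|e|)%N by rewrite e2.
case/card_gt0P => w we.
have wB := subsetP eB w we.
by rewrite (disjointFr hAB (subsetP eA w we)) in wB.
Qed.

Lemma edge_ok (A B : {set 'I_n}) G1 G2 u v : [disjoint A & B] ->
  G1 \subset binom2 A -> G2 \subset binom2 B -> acyclicb G1 -> u != v -> [set u; v] \in G1 ->
  ~~ connect (adj ((G1 :|: G2) :\ [set u; v])) u v.
Proof.
move=> hAB h1 h2 hG uv e1.
have eA := subsetP h1 _ e1.
have e2 : [set u; v] \notin G2.
  by apply/negP => /(subsetP h2) eB; rewrite (disjointFr (binom_disj hAB) eA) in eB.
have -> : (G1 :|: G2) :\ [set u; v] = (G1 :\ [set u; v]) :|: G2.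
  apply/setP => w; rewrite !inE; case: (w =P [set u; v]) => [->|] /=; first by rewrite (negbTE e2).
  done.
have uA : u \in A by move: eA; rewrite inE => /andP[/subsetP -> //]; rewrite !inE eqxx.
apply/negP => /(conn_restr hAB _ h2 uA) => h.
have := acyc_edge hG uv e1; rewrite h //.
by apply: subset_trans h1; apply: subsetDl.
Qed.

Lemma acyc_union (S1 S2 : {set 'I_n}) G1 G2 : [disjoint S1 & S2] ->
  G1 \subset binom2 S1 -> G2 \subset binom2 S2 -> acyclicb G1 -> acyclicb G2 ->
  acyclicb (G1 :|: G2).
Proof.
move=> hd h1 h2 a1 a2; apply: edge_acyc => u v uv; rewrite in_setU => /orP[e|e].
  exact: (edge_ok hd h1 h2 a1 uv e).
rewrite setUC; apply: (edge_ok _ h2 h1 a2 uv e).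
by rewrite disjoint_sym.
Qed.

End Split2.

Section PiSplit.
Variable n : nat.
Implicit Types F G T : {set {set 'I_n}}.

Lemma Pi_big F : Pi F = \prod_(C in parts F | (1 < #|C|)%N) #|C|.
Proof.
rewrite /Pi big_mkcondr /=; apply: eq_bigr => C /imsetP[z _ ->].
case: ifP => // /negbT; rewrite -leqNgt => h; apply/eqP.
by rewrite eqn_leq h comp_card_gt0.
Qed.

Lemma binom2_mono (A B : {set 'I_n}) : A \subset B -> binom2 A \subset binom2 B.
Proof.
move=> AB; apply/subsetP => e; rewrite !inE => /andP[eA ->].
by rewrite (subset_trans eA AB).
Qed.

Lemma big_comp_in (S : {set 'I_n}) G z : G \subset binom2 S -> (1 < #|comp G z|)%N -> z \in S.
Proof.
move=> hG; case: (boolP (z \in S)) => // zS; by rewrite (comp_out hG zS) cards1.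
Qed.

Lemma Pi_union (S1 S2 : {set 'I_n}) G1 G2 : [disjoint S1 & S2] ->
  G1 \subset binom2 S1 -> G2 \subset binom2 S2 -> Pi (G1 :|: G2) = Pi G1 * Pi G2.
Proof.
move=> hd h1 h2; rewrite !Pi_big.
have h12 : G1 :|: G2 \subset binom2 (S1 :|: S2).
  by rewrite subUset (subset_trans h1 (binom2_mono (subsetUl _ _)))
             (subset_trans h2 (binom2_mono (subsetUr _ _))).
have hd' : [disjoint S2 & S1] by rewrite disjoint_sym.
set P1 := [pred C : {set 'I_n} | (C \in parts G1) && (1 < #|C|)%N].
set P2 := [pred C : {set 'I_n} | (C \in parts G2) && (1 < #|C|)%N].
rewrite (eq_bigl [predU P1 & P2]); last first.
  move=> C; rewrite !inE /=; apply/andP/orP => [[/imsetP[z _ ->] c1]|].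
    have zS := big_comp_in h12 c1; rewrite inE in zS.
    case/orP: zS => zS.
      by left; rewrite (comp_restr hd h1 h2 zS) in c1 *; rewrite imset_f.
    right; rewrite setUC in c1 *; rewrite (comp_restr hd' h2 h1 zS) in c1 *.
    by rewrite imset_f.
  case=> /andP[/imsetP[z _ ->] c1]; split=> //.
    have zS := big_comp_in h1 c1; by rewrite -(comp_restr hd h1 h2 zS) imset_f.
  have zS := big_comp_in h2 c1; by rewrite setUC -(comp_restr hd' h2 h1 zS) imset_f.
rewrite bigU //; apply/pred0P => C /=; apply/negP => /andP[].
rewrite !inE => /andP[/imsetP[z1 _ ->] c1] /andP[/imsetP[z2 _ e] _].
have z1S := big_comp_in h1 c1.
have : z1 \in comp G2 z2 by rewrite -e comp_self.
have c2 : (1 < #|comp G2 z2|)%N by rewrite -e.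
rewrite inE => /(conn_stay h2 (big_comp_in h2 c2)) z1S2.
by rewrite (disjointFr hd z1S) in z1S2.
Qed.

End PiSplit.

Lemma arith_aux a b c x y m : (a + (x + y) = m -> b + x = m -> c + y = m -> a + m = b + c)%N.
Proof. lia. Qed.

Section Indep.
Import GRing.Theory Num.Theory.
Local Open Scope ring_scope.
Variable n : nat.
Implicit Types F G T : {set {set 'I_n}}.

Lemma Pi0 : Pi (set0 : {set {set 'I_n}}) = 1%N.
Proof.
rewrite Pi_big big1 // => C /andP[/imsetP[z _ ->]]; by rewrite comp0 cards1.
Qed.

Lemma binom2_K (S : {set 'I_n}) : binom2 S \subset Kedges n.
Proof. exact: binom2_mono (subsetT S). Qed.

Lemma contains_indep (S1 S2 : {set 'I_n}) G1 G2 (x0 : 'I_n) : [disjoint S1 & S2] ->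
  G1 \subset binom2 S1 -> G2 \subset binom2 S2 ->
  (fT (G1 :|: G2))%:R * (fT (set0 : {set {set 'I_n}}))%:R = (fT G1)%:R * (fT G2)%:R :> rat.
Proof.
move=> hd h1 h2.
case a1: (acyclicb G1); last first.
  rewrite (fT_zero (negbT a1)) fT_zero ?mul0r ?mulr0 //.
  by apply/negP => /(acyc_sub (subsetUl _ _)); rewrite a1.
case a2: (acyclicb G2); last first.
  rewrite (fT_zero (negbT a2)) fT_zero ?mul0r ?mulr0 //.
  by apply/negP => /(acyc_sub (subsetUr _ _)); rewrite a2.
have a12 := acyc_union hd h1 h2 a1 a2.
have a0 : acyclicb (set0 : {set {set 'I_n}}) by apply: acyc_sub a1; apply: sub0set.
have k1 := subset_trans h1 (binom2_K S1).
have k2 := subset_trans h2 (binom2_K S2).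
have k12 : G1 :|: G2 \subset Kedges n by rewrite subUset k1 k2.
have k0 : (set0 : {set {set 'I_n}}) \subset Kedges n by apply: sub0set.
have n0 : (n%:R : rat) != 0 by rewrite pnatr_eq0 -lt0n (leq_ltn_trans (leq0n _) (ltn_ord x0)).
have nn : (n%:R ^+ 2 * n%:R ^+ 2 : rat) != 0 by rewrite !mulf_neq0 // expf_neq0.
apply: (mulIf nn).
transitivity (((fT (G1 :|: G2))%:R * n%:R ^+ 2) * ((fT (set0 : {set {set 'I_n}}))%:R * n%:R ^+ 2) : rat).
  by ring.
transitivity (((fT G1)%:R * n%:R ^+ 2) * ((fT G2)%:R * n%:R ^+ 2) : rat); last by ring.
rewrite !formula // (Pi_union hd h1 h2) Pi0 card_parts0 natrM.
have c12 := parts_count a12 k12; have c1 := parts_count a1 k1; have c2 := parts_count a2 k2.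
have d : #|G1 :|: G2| = (#|G1| + #|G2|)%N.
  rewrite cardsU; have -> : G1 :&: G2 = set0.
    apply/setP => e; rewrite !inE; apply/negP => /andP[e1 e2].
    have := disjointFr (binom_disj hd) (subsetP h1 _ e1).
    by rewrite (subsetP h2 _ e2).
  by rewrite cards0 subn0.
have e : (#|parts (G1 :|: G2)| + n = #|parts G1| + #|parts G2|)%N.
  rewrite d in c12; exact: arith_aux c12 c1 c2.
rewrite mulr1 [LHS](_ : _ = n%:R ^+ (#|parts (G1 :|: G2)| + n) * ((Pi G1)%:R * (Pi G2)%:R)).
  by rewrite e exprD mulrACA.
by rewrite exprD mulrAC.
Qed.


End Indep.

Section Final.
Import GRing.Theory Num.Theory.
Local Open Scope ring_scope.
Variable n : nat.
Implicit Types F G T B : {set {set 'I_n}}.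

Definition sgn F G : rat := (-1) ^+ #|G :\: F|.

Lemma inner T F B : F \subset B ->
  \sum_(G : {set {set 'I_n}} | (F \subset G) && (G \subset B)) sgn F G * (G \subset T)%:R = (T :&: B == F)%:R.
Proof.
move=> FB.
transitivity (\sum_(G : {set {set 'I_n}} | (F \subset G) && (G \subset B :&: T)) sgn F G).
  rewrite big_mkcond [RHS]big_mkcond; apply: eq_bigr => G _.
  rewrite subsetI; case: (F \subset G); case: (G \subset B); case: (G \subset T) => /=;
  by rewrite ?mulr1 ?mulr0.
case: (boolP (F \subset B :&: T)) => hF.
  by rewrite moeb // setIC eq_sym.
rewrite big_pred0; last first.
  move=> G; apply/negP => /andP[FG GB]; by rewrite (subset_trans FG GB) in hF.
have -> : (T :&: B == F) = false; last by [].
by apply/negP => /eqP e; rewrite setIC e subxx in hF.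
Qed.

Lemma card_sumr (A : {set {set {set 'I_n}}}) (P : pred {set {set 'I_n}}) :
  (#|[set T in A | P T]|%:R : rat) = \sum_(T in A) (P T)%:R.
Proof.
rewrite card_sum natr_sum [RHS]big_mkcond; apply: eq_bigr => T _.
by case: (T \in A); case: (P T).
Qed.

Lemma fT_sum G : (fT G)%:R = \sum_(T in spanning_trees n) (G \subset T)%:R :> rat.
Proof. exact: card_sumr. Qed.

Lemma count1 F B : F \subset B ->
  (#|[set T in spanning_trees n | T :&: B == F]|%:R : rat) =
  \sum_(G : {set {set 'I_n}} | (F \subset G) && (G \subset B)) sgn F G * (fT G)%:R.
Proof.
move=> FB; rewrite card_sumr.
under [RHS]eq_bigr do rewrite fT_sum mulr_sumr.
rewrite exchange_big /=; apply: eq_bigr => T _; exact/esym/inner.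
Qed.

Lemma count2 F1 F2 B1 B2 : F1 \subset B1 -> F2 \subset B2 ->
  (#|[set T in spanning_trees n | (T :&: B1 == F1) && (T :&: B2 == F2)]|%:R : rat) =
  \sum_(G1 : {set {set 'I_n}} | (F1 \subset G1) && (G1 \subset B1)) \sum_(G2 : {set {set 'I_n}} | (F2 \subset G2) && (G2 \subset B2))
     sgn F1 G1 * sgn F2 G2 * (fT (G1 :|: G2))%:R.
Proof.
move=> h1 h2; rewrite card_sumr.
transitivity (\sum_(T in spanning_trees n)
   (\sum_(G1 : {set {set 'I_n}} | (F1 \subset G1) && (G1 \subset B1)) sgn F1 G1 * (G1 \subset T)%:R) *
   (\sum_(G2 : {set {set 'I_n}} | (F2 \subset G2) && (G2 \subset B2)) sgn F2 G2 * (G2 \subset T)%:R)).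
  by apply: eq_bigr => T _; rewrite !inner //; case: (_ == F1); case: (_ == F2); rewrite ?mulr1 ?mulr0.
under eq_bigr do rewrite big_distrlr /=.
rewrite exchange_big /=; apply: eq_bigr => G1 _.
rewrite exchange_big /=; apply: eq_bigr => G2 _.
rewrite fT_sum mulr_sumr; apply: eq_bigr => T _.
by rewrite subUset; case: (G1 \subset T); case: (G2 \subset T); rewrite /= ?mulr1 ?mulr0 ?mul0r.
Qed.

End Final.

Section Main.
Import GRing.Theory Num.Theory.
Local Open Scope ring_scope.

Lemma fT_set0 n : fT (set0 : {set {set 'I_n}}) = #|spanning_trees n|.
Proof. by apply: eq_card => T; rewrite !inE sub0set andbT. Qed.

Lemma key_identity n (S1 S2 : {set 'I_n}) (hdis : [disjoint S1 & S2]) (F1 F2 : {set {set 'I_n}}) :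
  (#|[set T in spanning_trees n | (T :&: binom2 S1 == F1) && (T :&: binom2 S2 == F2)]|%:R
     * #|spanning_trees n|%:R
   = #|[set T in spanning_trees n | T :&: binom2 S1 == F1]|%:R
     * #|[set T in spanning_trees n | T :&: binom2 S2 == F2]|%:R :> rat).
Proof.
case: (posnP n) => [n0|npos].
  subst n.
  have eB : forall S : {set 'I_0}, binom2 S = set0.
    move=> S; apply/setP => e; rewrite !inE; apply/negbTE; apply/negP => /andP[_ /eqP e2].
    by have := max_card (mem e); rewrite card_ord e2.
  rewrite !card_sumr !eB.
  rewrite [X in X * _ = _](eq_bigr (fun _ => ((set0 == F1) && (set0 == F2))%:R)); last by move=> T _; rewrite setI0.
  rewrite [X in _ = X * _](eq_bigr (fun _ => (set0 == F1)%:R)); last by move=> T _; rewrite setI0.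
  rewrite [X in _ = _ * X](eq_bigr (fun _ => (set0 == F2)%:R)); last by move=> T _; rewrite setI0.
  rewrite !sumr_const.
  by case: (set0 == F1); case: (set0 == F2); rewrite /= ?mul0rn ?mul0r ?mulr0.
pose x0 := Ordinal npos.
case: (boolP (F1 \subset binom2 S1)) => h1; last first.
  have z : forall T, (T :&: binom2 S1 == F1) = false.
    by move=> T; apply/negP => /eqP e; rewrite -e subsetIr in h1.
  rewrite [X in X * _ = _]card_sumr [X in _ = X * _]card_sumr.
  rewrite big1 => [|T _]; last by rewrite z.
  by rewrite big1 => [|T _]; rewrite ?z ?mul0r.
case: (boolP (F2 \subset binom2 S2)) => h2; last first.
  have z : forall T, (T :&: binom2 S2 == F2) = false.
    by move=> T; apply/negP => /eqP e; rewrite -e subsetIr in h2.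
  rewrite [X in X * _ = _]card_sumr [X in _ = _ * X]card_sumr.
  rewrite big1 => [|T _]; last by rewrite z andbF.
  by rewrite big1 => [|T _]; rewrite ?z ?mul0r ?mulr0.
rewrite count2 // !count1 // -fT_set0 mulr_suml big_distrlr /=.
apply: eq_bigr => G1 /andP[_ G1B]; rewrite mulr_suml; apply: eq_bigr => G2 /andP[_ G2B].
rewrite -mulrA (contains_indep x0 hdis G1B G2B).
by rewrite mulrACA.
Qed.

End Main.

Theorem lemma2p5 (n : nat) (S1 S2 : {set 'I_n}) (hdis : [disjoint S1 & S2])
    (F1 F2 : {set {set 'I_n}}) :
  Pr_ust (fun T => (T :&: binom2 S1 == F1) && (T :&: binom2 S2 == F2))
  = (Pr_ust (fun T => T :&: binom2 S1 == F1) * Pr_ust (fun T => T :&: binom2 S2 == F2))%R.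
Proof.
rewrite /Pr_ust.
have kid := key_identity hdis F1 F2.
set A12 := (#|_|%:R : rat) in kid *.
set N := (#|spanning_trees n|%:R : rat) in kid *.
case: (N =P 0%R) => [->|/eqP N0]; first by rewrite GRing.invr0 !GRing.mulr0.
rewrite GRing.mulrACA -kid -GRing.mulrA (GRing.mulrA N) GRing.mulfV // GRing.mul1r.
by [].
Qed.
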